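(* Let $\mathcal{H}$ be a finite-dimensional complex Hilbert space, let $P$ be a traceless Hermitian operator with $P^2=I$, let $H$ be a Hamiltonian (Hermitian operator) with $[H,P]=0$, and let $A$ and $B$ be Hermitian operators satisfying $\{A,P\} = \{B,P\} = 0$. Let $\rho = |\Psi\rangle\langle\Psi|$ where $|\Psi\rangle$ is a (normalized) eigenstate of $H$ with $P|\Psi\rangle = p|\Psi\rangle$, $p\in\{+1,-1\}$. Then for every real $t$, $$C(A,B,t) = p\, Q\!\left(\rho, \tfrac{P+A}{\sqrt{2}}, B(t)\right) + \mathrm{i}\, Q\!\left(\rho, \tfrac{I+\mathrm{i}A}{\sqrt{2}}, B(t)\right).$$
   Context: For an operator $O$, $O(t) := e^{\mathrm{i}Ht} O e^{-\mathrm{i}Ht}$. The two-point time correlator is $C(A,B,t) := \mathrm{Tr}[\rho\, A\, B(t)]$. The quench function is $Q(\rho,K,M) := \mathrm{Tr}(K\rho K^\dagger M)$ for operators $K$, $M$. $\{X,Y\} = XY+YX$. *)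

(* Defs.v *)
From HB Require Import structures.
From mathcomp Require Import all_boot all_order all_algebra.
From mathcomp Require Import all_classical all_reals all_analysis.
From mathcomp Require Import complex.
Set Implicit Arguments. Unset Strict Implicit. Unset Printing Implicit Defensive.
Import Order.TTheory GRing.Theory Num.Theory.
Import numFieldNormedType.Exports.
Local Open Scope ring_scope.
Local Open Scope complex_scope.

(* Operators on an n-dimensional complex Hilbert space C^n are n x n matrices
   over C := R[i], R a real number field (realType). *)

Definition adj (R : realType) (m n : nat) (M : 'M[R[i]]_(m, n)) : 'M[R[i]]_(n, m) :=
  map_mx Num.conj (trmx M).

Lemma adjE (R : realType) (m n : nat) (M : 'M[R[i]]_(m, n)) :
  adj M = (M ^t Num.conj)%sesqui.
Proof. by []. Qed.

Definition acomm (R : realType) (n : nat) (X Y : 'M[R[i]]_n) : 'M[R[i]]_n :=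
  X *m Y + Y *m X.

Definition expmx (R : realType) (n : nat) (M : 'M[R[i]]_n) : 'M[R[i]]_n :=
  limn [series (((k`!)%:R : R[i])^-1 *: M ^+ k)]_k.

Definition evol (R : realType) (n : nat) (H : 'M[R[i]]_n) (t : R)
  (O : 'M[R[i]]_n) : 'M[R[i]]_n :=
  expmx (('i * t%:C) *: H) *m O *m expmx ((- ('i * t%:C)) *: H).

Definition corr (R : realType) (n : nat) (H rho A B : 'M[R[i]]_n) (t : R) : R[i] :=
  \tr (rho *m A *m evol H t B).

Definition quench (R : realType) (n : nat) (rho K M : 'M[R[i]]_n) : R[i] :=
  \tr (K *m rho *m adj K *m M).

(* Hermitian (self-adjoint) operator: the library's [hermitianmx] predicate
   with eps = false and theta = complex conjugation, i.e. M = M^T conj. *)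
Definition hermitian_op (R : realType) (n : nat) (M : 'M[R[i]]_n) : bool :=
  M \is hermitianmx _ false Num.conj.

(* Main.v *)
Require Import Defs.
From HB Require Import structures.
From mathcomp Require Import all_boot all_order all_algebra.
From mathcomp Require Import all_classical all_reals all_analysis.
From mathcomp Require Import complex.
From mathcomp Require Import ring.
Import Order.TTheory GRing.Theory Num.Theory.
Local Open Scope ring_scope.
Local Open Scope complex_scope.
Import numFieldNormedType.Exports.
Import numFieldNormedType.Exports.

Local Open Scope classical_set_scope.
Section Adj.
Variable R : realType.
Lemma conjE (x : R[i]) : Num.conj x = x^*%C.
Proof. by []. Qed.

Lemma adjM m n k (X : 'M[R[i]]_(m, n)) (Y : 'M[R[i]]_(n, k)) : adj (X *m Y) = adj Y *m adj X.
Proof.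
apply/matrixP => a b; rewrite !mxE rmorph_sum; apply: eq_bigr => l _.
by rewrite !mxE rmorphM mulrC.
Qed.

Lemma adjD m n (X Y : 'M[R[i]]_(m, n)) : adj (X + Y) = adj X + adj Y.
Proof. by apply/matrixP => a b; rewrite !mxE rmorphD. Qed.

Lemma adjZ m n (a : R[i]) (X : 'M[R[i]]_(m, n)) : adj (a *: X) = Num.conj a *: adj X.
Proof. by apply/matrixP => i j; rewrite !mxE rmorphM. Qed.

Lemma adj1 n : adj (1%:M : 'M[R[i]]_n) = 1%:M.
Proof. by apply/matrixP => i j; rewrite !mxE eq_sym rmorph_nat. Qed.

Lemma conji : ('i)^*%C = - 'i :> R[i].
Proof. by apply/eqP; rewrite eq_complex /= oppr0 !eqxx. Qed.

Lemma adjH n (X : 'M[R[i]]_n) : hermitian_op X -> adj X = X.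
Proof. by move=> /is_hermitianmxP {2}->; rewrite expr0 scale1r. Qed.
End Adj.

Lemma expmx_comm (R : realType) (n : nat) (P M : 'M[R[i]]_n) :
  P *m M = M *m P -> P *m expmx M = expmx M *m P.
Proof.
move=> HPM; rewrite /expmx.
set u := series _.
have Hu : forall k, P *m u k = u k *m P.
  move=> k; rewrite /u /series /=.
  rewrite mulmx_sumr mulmx_suml; apply: eq_bigr => m _.
  rewrite -scalemxAl -scalemxAr; congr (_ *: _).
  elim: m {u} => [|m IH]; first by rewrite !expr0 mulmx1 mul1mx.
  by rewrite !exprS -!mulmxE mulmxA HPM -mulmxA IH mulmxA.
have [cu|ncu] := pselect (cvgn u); last first.
  rewrite /lim /lim_in; case: xgetP => [l _ Hl|_]; first by exfalso; apply: ncu; apply/cvg_ex; exists l.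
  rewrite /point /= /point /=.
  apply/matrixP => a b; rewrite !mxE.
  by rewrite !big1 // => k _; rewrite mxE ?mulr0 ?mul0r.
set l := limn u.
apply/matrixP => i j; rewrite !mxE.
have cE : forall a b, (fun m => u m a b : R[i]^o) @ \oo --> (l a b : R[i]^o).
  move=> a b; have hh := (cvg_comp _ _ cu (@coord_continuous _ n n a b l)). exact: hh.
have h1 : (fun m => \sum_k P i k * u m k j : R[i]^o) @ \oo --> (\sum_k P i k * l k j : R[i]^o).
  have := (@cvg_big (R[i]^o) 'I_n +%R 0 (fun=> true) (@pseudometric_normed_Zmodule.add_continuous _ (R[i]^o)) nat _ (index_enum 'I_n) (fun k m => P i k * u m k j) (fun k => P i k * l k j) _).
  move=> hh; apply: hh.
  move=> k _; apply: cvgMl_tmp; exact: cE.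
have h2 : (fun m => \sum_k u m i k * P k j : R[i]^o) @ \oo --> (\sum_k l i k * P k j : R[i]^o).
  have := (@cvg_big (R[i]^o) 'I_n +%R 0 (fun=> true) (@pseudometric_normed_Zmodule.add_continuous _ (R[i]^o)) nat _ (index_enum 'I_n) (fun k m => u m i k * P k j) (fun k => l i k * P k j) _).
  move=> hh; apply: hh.
  move=> k _; apply: cvgMr_tmp; exact: cE.
have h3 : (fun m => \sum_k P i k * u m k j - \sum_k u m i k * P k j : R[i]^o) @ \oo --> (\sum_k P i k * l k j - \sum_k l i k * P k j : R[i]^o).
  exact: (cvgB h1 h2).
have h0 : (fun m => \sum_k P i k * u m k j - \sum_k u m i k * P k j : R[i]^o) = fun=> 0.
  apply/funext => m; apply/eqP; rewrite subr_eq0; apply/eqP.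
  by move: (Hu m) => /matrixP/(_ i j); rewrite !mxE.
rewrite h0 in h3.
apply/eqP; rewrite -subr_eq0; apply/eqP.
apply: (cvg_unique _ h3); last exact: cvg_cst.
exact: norm_hausdorff.
Qed.

Lemma conj_anti (R : realType) n (U V B P : 'M[R[i]]_n) :
  P *m U = U *m P -> P *m V = V *m P -> P *m B = - (B *m P) ->
  P *m (U *m B *m V) = - (U *m B *m V *m P).
Proof.
move=> PU PV PB.
rewrite -!mulmxA -PV !mulmxA PU -(mulmxA _ P B) PB.
by rewrite mulmxN !mulNmx !mulmxA.
Qed.

Lemma final (K : comRingType) (p i c a b : K) : p * p = 1 -> i * i = -1 -> c * c*2 = 1 ->
  a = p * (c * (c * (p * (p * 0) + p * b + (p * a + 0)))) +
      i * (c * (c * (0 + i * b + (- i * a + - i * (i * 0))))).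
Proof.
move=> pp ii cc.
have -> : p * (c * (c * (p * (p * 0) + p * b + (p * a + 0)))) +
      i * (c * (c * (0 + i * b + (- i * a + - i * (i * 0))))) =
  c * c*(p * p) * (a+b) + c * c*(i * i) * (b-a) by ring.
rewrite pp ii.
have -> : c * c*1 * (a+b) + c * c*(-1) * (b-a) = c * c*2 * a by ring.
by rewrite cc mul1r.
Qed.

Theorem theorem1 (R : realType) (n : nat) (P H A B : 'M[R[i]]_n)
    (psi : 'cV[R[i]]_n) (E p : R[i]) :
  hermitian_op P -> \tr P = 0 -> P *m P = 1%:M ->
  hermitian_op H -> H *m P = P *m H ->
  hermitian_op A -> hermitian_op B -> acomm A P = 0 -> acomm B P = 0 ->
  adj psi *m psi = 1%:M ->
  H *m psi = E *: psi ->
  P *m psi = p *: psi -> (p = 1 \/ p = -1) ->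
  let rho := psi *m adj psi in
  forall t : R,
    corr H rho A B t =
      p * quench rho (((Num.sqrt (2 : R))%:C)^-1 *: (P + A)) (evol H t B)
      + 'i * quench rho (((Num.sqrt (2 : R))%:C)^-1 *: (1%:M + 'i *: A)) (evol H t B).
Proof.
move=> hP _ PP _ HP hA _ AP BP _ _ Pp hp rho t.
set y := adj psi.
pose f (X : 'M[R[i]]_n) := \tr (y *m X *m psi).
have cE : corr H rho A B t = f (A *m evol H t B).
  by rewrite /corr /rho /f -/y -!mulmxA mxtrace_mulC -!mulmxA.
rewrite cE.
set M := evol H t B.
have PB : P *m B = - (B *m P) by apply/eqP; rewrite -subr_eq0 opprK addrC; apply/eqP; exact: BP.
have PA : P *m A = - (A *m P) by apply/eqP; rewrite -subr_eq0 opprK addrC; apply/eqP; exact: AP.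
have PM : P *m M = - (M *m P).
  rewrite /M /evol; apply: conj_anti => //; apply: expmx_comm;
    by rewrite -scalemxAr -scalemxAl HP.
clearbody M.
have fD X Y : f (X + Y) = f X + f Y by rewrite /f mulmxDr mulmxDl mxtraceD.
have fZ a X : f (a *: X) = a * f X by rewrite /f -scalemxAr -scalemxAl mxtraceZ.
have fN X : f (- X) = - f X by rewrite -scaleN1r fZ mulN1r.
have cp : Num.conj p = p by case: hp => ->; rewrite ?rmorph1 ?rmorphN1.
have yP : y *m P = p *: y by rewrite /y -{1}(@adjH _ _ _ hP) -adjM Pp adjZ cp.
have fPl X : f (P *m X) = p * f X by rewrite /f mulmxA yP -!scalemxAl mxtraceZ.
have fPr X : f (X *m P) = p * f X by rewrite /f -!mulmxA Pp -!scalemxAr mxtraceZ.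
have p0 : p != 0 by case: hp => ->; rewrite ?oppr_eq0 oner_eq0.
have anti X : P *m X = - (X *m P) -> f X = 0.
  move=> hX; have := fPl X; rewrite hX fN fPr => h.
  have h2 : p * f X *+ 2 = 0 by rewrite mulr2n -{1}h addNr.
  move/eqP: h2; rewrite -mulr_natr mulf_eq0 pnatr_eq0 /= orbF mulf_eq0 (negbTE p0) /=.
  by move/eqP.
have fM : f M = 0 by exact: anti.
have fAMA : f (A *m M *m A) = 0.
  apply: anti.
  by rewrite !mulmxA PA mulNmx -!mulmxA PM mulmxN opprK -!mulmxA PA !mulmxN.
have qE K : quench rho K M = f (adj K *m M *m K).
  rewrite /quench /rho /f -/y -!mulmxA mxtrace_mulC -!mulmxA.
  by rewrite mxtrace_mulC -!mulmxA.
rewrite !qE !adjZ !adjD adjZ adj1 !adjH //.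
rewrite -!scalemxAl -!scalemxAr !fZ.
rewrite !mulmxDl !mulmxDr !fD.
rewrite !mul1mx !mulmx1 -!scalemxAl -!scalemxAr !fZ !fPr -(mulmxA P M A) !fPl fM fAMA.
rewrite !conjE conjc_inv conjc_real conji.
set c := (Num.sqrt 2)%:C^-1.
apply: final.
- by case: hp => ->; rewrite ?mulr1 ?mulrNN ?mulr1.
- by rewrite -expr2 sqr_i.
- by rewrite /c -invfM -rmorphM -expr2 sqr_sqrtr ?ler0n // rmorph_nat mulVf // pnatr_eq0.
Qed.
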